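(* Let $(V,E)$ be a finite graph and $p\in[0,1]$. Let $(\eta_t,\sigma_t)_{t\ge0}$ be a continuous-time Markov jump process on $\{0,1\}^E\times\{-1,1\}^V$ with the following rates: (i) if $\eta'=\eta$ and there is $x\in V$ with $\sigma'=\sigma^x$ and $\eta(e)=0$ for all $e\in E_x$, the rate from $(\eta,\sigma)$ to $(\eta',\sigma')$ is $1$; (ii) if $\sigma'=\sigma$ and there is $e\in E$ with $\eta'=\eta^e$, the rate is $p\mathbf 1_{\eta(e)=0}\delta_\sigma(e)+(1-p)\mathbf 1_{\eta(e)=1}$; (iii) all other off-diagonal rates are $0$. Suppose $(\eta_0,\sigma_0)$ is distributed according to $IP$. Then for every $x\in V$, every $\sigma\in\{-1,1\}^V$ and every $s\ge0$, $$\lim_{t\to0}\frac1t\,\mathbb P(\sigma_{t+s}=\sigma^x\mid\sigma_s=\sigma)=(1-p)^{|\{e\in E_x:\ \delta_\sigma(e)=1\}|}.$$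
   Context: Edge configurations $\eta\in\{0,1\}^E$, spin configurations $\sigma\in\{-1,1\}^V$. For $e=\langle x,y\rangle$, $\delta_\sigma(e)=\mathbf 1_{\sigma(x)=\sigma(y)}$. $IP(\eta,\sigma)=\frac1Z\prod_{e\in E}\big(p\mathbf 1_{\eta(e)=1}\delta_\sigma(e)+(1-p)\mathbf 1_{\eta(e)=0}\big)$ with $Z$ the normalizing constant. $E_x$ is the set of edges with endvertex $x$; $\sigma^x$ is $\sigma$ with the spin at $x$ flipped; $\eta^e$ is $\eta$ with the value at edge $e$ changed. *)

(* Defs.v *)
From HB Require Import structures.
From mathcomp Require Import all_boot all_order all_algebra.
From mathcomp Require Import all_classical all_reals all_analysis.
Set Implicit Arguments. Unset Strict Implicit. Unset Printing Implicit Defensive.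
Import Order.TTheory GRing.Theory Num.Theory.
Local Open Scope ring_scope.

Definition edge (V : finType) (adj : rel V) :=
  {e : {set V} | [exists x, exists y, adj x y && (e == [set x; y])]}.

(* spins are encoded as bool (true = +1, false = -1);
   edge configurations as bool (true = 1, false = 0). *)
Definition state (V : finType) (adj : rel V) : finType :=
  ({ffun edge adj -> bool} * {ffun V -> bool})%type.

Section Model.
Variables (R : realType) (V : finType) (adj : rel V) (p : R).

Definition Ex (x : V) : {set edge adj} := [set e : edge adj | x \in val e].

Definition delta (sg : {ffun V -> bool}) (e : edge adj) : bool :=
  [forall u in val e, forall v in val e, sg u == sg v].

Definition flip_spin (sg : {ffun V -> bool}) (x : V) : {ffun V -> bool} :=
  [ffun y => if y == x then ~~ sg y else sg y].

Definition flip_edge (et : {ffun edge adj -> bool}) (e : edge adj)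
  : {ffun edge adj -> bool} :=
  [ffun f => if f == e then ~~ et f else et f].

Definition rate (a b : state adj) : R :=
  if [exists x, [&& a.1 == b.1, b.2 == flip_spin a.2 x &
                  [forall e in Ex x, ~~ a.1 e]]] then 1
  else if [pick e | (a.2 == b.2) && (b.1 == flip_edge a.1 e)] is Some e then
    p * (~~ a.1 e)%:R * (delta a.2 e)%:R + (1 - p) * (a.1 e)%:R
  else 0.

Definition gen (a b : state adj) : R :=
  if a == b then - \sum_(c | c != a) rate a c else rate a b.

Fixpoint genpow (n : nat) (a b : state adj) : R :=
  if n is n'.+1 then \sum_c gen a c * genpow n' c b else (a == b)%:R.

Definition trans (t : R) (a b : state adj) : R :=
  limn (fun N : nat => \sum_(n < N) t ^+ n / (n`!)%:R * genpow n a b).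

Definition IPweight (a : state adj) : R :=
  \prod_(e : edge adj)
     (p * (a.1 e)%:R * (delta a.2 e)%:R + (1 - p) * (~~ a.1 e)%:R).
Definition IP (a : state adj) : R :=
  IPweight a / \sum_(c : state adj) IPweight c.

Definition law_at (s : R) (b : state adj) : R :=
  \sum_(a : state adj) IP a * trans s a b.

Definition prob_spin (s : R) (sg : {ffun V -> bool}) : R :=
  \sum_(a : state adj | a.2 == sg) law_at s a.

(* P(sigma_s = sg, sigma_{s+t} = sg') (Markov property) *)
Definition prob_spin2 (s t : R) (sg sg' : {ffun V -> bool}) : R :=
  \sum_(a : state adj | a.2 == sg) \sum_(b : state adj | b.2 == sg')
     law_at s a * trans t a b.

Definition cond_prob (s t : R) (sg sg' : {ffun V -> bool}) : R :=
  prob_spin2 s t sg sg' / prob_spin s sg.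

End Model.

(* Main.v *)
Require Import Defs.
From HB Require Import structures.
From mathcomp Require Import all_boot all_order all_algebra.
From mathcomp Require Import all_classical all_reals all_analysis.
From mathcomp Require Import ring lra.
Import Order.TTheory GRing.Theory Num.Theory numFieldNormedType.Exports.
Local Open Scope ring_scope.
Local Open Scope classical_set_scope.

Section Comb.
Variables (R : realType) (V : finType) (adj : rel V) (p : R).
Local Notation S := (state adj).
Local Notation rate := (@rate R V adj p).
Local Notation gen := (@gen R V adj p).
Local Notation IPw := (@IPweight R V adj p).

Definition Fw (b d : bool) : R := p * b%:R * d%:R + (1 - p) * (~~ b)%:R.

Lemma IPwE a : IPw a = \prod_(e : edge adj) Fw (a.1 e) (delta a.2 e).
Proof. by []. Qed.

Definition spin_cond (a b : S) :=
  [exists x, [&& a.1 == b.1, b.2 == flip_spin a.2 x &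
                  [forall e in Ex adj x, ~~ a.1 e]]].
Definition edge_cond (a b : S) e := (a.2 == b.2) && (b.1 == flip_edge a.1 e).

Lemma rateE a b : rate a b = if spin_cond a b then 1
  else if [pick e | edge_cond a b e] is Some e then Fw (~~ a.1 e) (delta a.2 e)
  else 0.
Proof. rewrite /Defs.rate /Fw /spin_cond /edge_cond; case: ifP => //; case: pickP => // e _; by rewrite negbK. Qed.

Lemma flip_edgeE (et : {ffun edge adj -> bool}) (e f : edge adj) :
  flip_edge et e f = if f == e then ~~ et f else et f.
Proof. by rewrite /flip_edge ffunE. Qed.

Lemma flip_spinK (sg : {ffun V -> bool}) (y : V) : flip_spin (flip_spin sg y) y = sg.
Proof. by apply/ffunP => z; rewrite !ffunE; case: eqP => //; rewrite negbK. Qed.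

Lemma flip_edgeK (et : {ffun edge adj -> bool}) (e : edge adj) : flip_edge (flip_edge et e) e = et.
Proof. by apply/ffunP => z; rewrite !ffunE; case: eqP => //; rewrite negbK. Qed.

Lemma flip_spin_inj (sg : {ffun V -> bool}) (y z : V) : flip_spin sg y = flip_spin sg z -> y = z.
Proof.
move=> /ffunP /(_ y); rewrite !ffunE eqxx; case: eqP => // _.
by case: (sg y).
Qed.

Lemma flip_edge_inj (et : {ffun edge adj -> bool}) (e f : edge adj) : flip_edge et e = flip_edge et f -> e = f.
Proof.
move=> /ffunP /(_ e); rewrite !ffunE eqxx; case: eqP => // _.
by case: (et e).
Qed.

Lemma flip_spin_neq (sg : {ffun V -> bool}) (y : V) : flip_spin sg y != sg.
Proof.
apply/eqP => /ffunP /(_ y); rewrite ffunE eqxx; by case: (sg y).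
Qed.

Lemma spin_cond_sym1 a b : spin_cond a b -> spin_cond b a.
Proof.
case/existsP => y /and3P [/eqP e1 /eqP e2 /forall_inP cl].
apply/existsP; exists y; rewrite e1 eqxx e2 flip_spinK eqxx /=.
by apply/forall_inP => e /cl; rewrite e1.
Qed.

Lemma spin_cond_sym a b : spin_cond a b = spin_cond b a.
Proof. by apply/idP/idP => /spin_cond_sym1. Qed.

Lemma edge_cond_sym a b e : edge_cond a b e = edge_cond b a e.
Proof.
rewrite /edge_cond eq_sym; congr (_ && _).
apply/eqP/eqP => ->; by rewrite flip_edgeK.
Qed.

Lemma delta_flip (sg : {ffun V -> bool}) (y : V) (e : edge adj) : y \notin val e -> delta (flip_spin sg y) e = delta sg e.
Proof.
move=> ye; rewrite /delta; apply: eq_forallb_in => u uin.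
apply: eq_forallb_in => v vin; rewrite !ffunE.
have -> : (u == y) = false by apply/negbTE; apply: contraNneq ye => <-.
have -> : (v == y) = false by apply/negbTE; apply: contraNneq ye => <-.
by [].
Qed.

Lemma detailed_balance a b : IPw a * rate a b = IPw b * rate b a.
Proof.
rewrite !rateE (spin_cond_sym b a).
case: ifP => sc.
  rewrite !mulr1; case/existsP: sc => y /and3P [/eqP e1 /eqP e2 /forall_inP cl].
  rewrite !IPwE -e1 e2; apply: eq_bigr => e _.
  case he: (a.1 e); first last.
    by rewrite /Fw /= !mulr0 !mul0r !add0r.
  rewrite delta_flip //; apply/negP => ye.
  have := cl e; rewrite inE ye => /(_ isT); by rewrite he.
case: pickP => [e ce|none].
  have ce' : edge_cond b a e by rewrite -edge_cond_sym.
  case: pickP => [f cf|none]; last by have := none e; rewrite ce'.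
  have ef : f = e.
    move: cf ce'; rewrite /edge_cond => /andP [_ /eqP h1] /andP [_ /eqP h2].
    by apply: (@flip_edge_inj b.1); rewrite -h1 -h2.
  subst f.
  case/andP: ce => /eqP e2 /eqP e1.
  rewrite !IPwE (bigD1 e) //= [in RHS](bigD1 e) //= -e2 e1 (flip_edgeE a.1 e e) eqxx negbK.
  rewrite [in RHS](eq_bigr (fun f => Fw (a.1 f) (delta a.2 f))); last first.
    by move=> f /negbTE fe; rewrite (flip_edgeE a.1 e f) fe.
  by ring.
case: pickP => [f cf|_]; last by rewrite !mulr0.
by have := none f; rewrite edge_cond_sym cf.
Qed.

Lemma stationary b : \sum_a IPw a * gen a b = 0.
Proof.
rewrite (bigD1 b) //=.
have -> : \sum_(a | a != b) IPw a * gen a b = \sum_(a | a != b) IPw b * rate b a.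
  by apply: eq_bigr => a ab; rewrite /Defs.gen (negbTE ab) detailed_balance.
by rewrite /Defs.gen eqxx -mulr_sumr mulrN addNr.
Qed.


Definition closed_at (x : V) (a : S) := [forall e in Ex adj x, ~~ a.1 e].

Lemma rate_flip (sg : {ffun V -> bool}) (x : V) a b :
  a.2 = sg -> b.2 = flip_spin sg x ->
  rate a b = ((a.1 == b.1) && closed_at x a)%:R.
Proof.
move=> ha hb; rewrite rateE.
have -> : [pick e | edge_cond a b e] = None.
  case: pickP => [e /andP [/eqP h _] | //].
  by move: (flip_spin_neq sg x); rewrite -hb -h ha eqxx.
case: ifP => sc.
  case/existsP: sc => y /and3P [-> /eqP h cl].
  move: h; rewrite hb ha => /flip_spin_inj ->.
  by rewrite /closed_at cl.
case: (boolP ((a.1 == b.1) && closed_at x a)) => //= /andP [h cl].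

move: sc cl => /negbT/existsPn/(_ x); rewrite /closed_at h hb ha eqxx /= => /negbTE ->.
by [].
Qed.

Lemma gen_flip (sg : {ffun V -> bool}) (x : V) a : a.2 = sg ->
  \sum_(b | b.2 == flip_spin sg x) gen a b = (closed_at x a)%:R.
Proof.
move=> ha.
have neq b : b.2 = flip_spin sg x -> a != b.
  move=> hb; apply/negP => /eqP hab; move: (flip_spin_neq sg x).
  by rewrite -hb -hab ha eqxx.
rewrite (bigD1 (a.1, flip_spin sg x)) /=; last by rewrite eqxx.
rewrite big1 ?addr0.
  by rewrite /Defs.gen (negbTE (neq (a.1, flip_spin sg x) erefl)) (@rate_flip sg x a (a.1, flip_spin sg x) ha erefl) eqxx.
move=> b /andP [/eqP hb bn]; rewrite /Defs.gen (negbTE (neq _ hb)) (@rate_flip sg x a b ha hb).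
case: eqP => //= h1; move: bn; suff -> : b = (a.1, flip_spin sg x) by rewrite eqxx.
by case: b hb h1 => b1 b2 /= -> ->.
Qed.

Lemma sum_state2 (h : S -> R) (sg : {ffun V -> bool}) :
  \sum_(a | a.2 == sg) h a = \sum_(et : {ffun edge adj -> bool}) h (et, sg).
Proof.
transitivity (\sum_(et : {ffun edge adj -> bool}) \sum_(s | s == sg) h (et, s)).
  by rewrite pair_big /=; apply: eq_big => [[et s]|[et s] _].
by apply: eq_bigr => et _; rewrite big_pred1_eq.
Qed.

Lemma Fw_false d : Fw false d = 1 - p.
Proof. by rewrite /Fw /= mulr0 mul0r add0r mulr1. Qed.

Lemma sum_closed (sg : {ffun V -> bool}) (x : V) :
  \sum_(a | a.2 == sg) IPw a * (closed_at x a)%:R =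
  (1 - p) ^+ #|[set e in Ex adj x | delta sg e]| * \sum_(a | a.2 == sg) IPw a.
Proof.
rewrite !sum_state2.
pose G e b := Fw b (delta sg e) * (if e \in Ex adj x then (~~ b)%:R else 1).
transitivity (\sum_(et : {ffun edge adj -> bool}) \prod_e G e (et e)).
  apply: eq_bigr => et _; rewrite IPwE /G big_split /=; congr (_ * _).
  rewrite /closed_at /=; case: (boolP [forall e in Ex adj x, ~~ et e]).
    move/forall_inP => H; rewrite big1 // => e _; case: ifP => // /H.
    by move/negbTE => ->.
  case/forall_inPn => e ein /negbNE he.
  by rewrite (bigD1 e) //= ein he mul0r.
rewrite -(bigA_distr_bigA G).
rewrite (eq_bigr (fun (et : {ffun edge adj -> bool}) => \prod_e Fw (et e) (delta sg e))); last by [].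
rewrite -(bigA_distr_bigA (fun e b => Fw b (delta sg e))).
rewrite (bigID (fun e => e \in Ex adj x)) /= [in RHS](bigID (fun e => e \in Ex adj x)) /=.
rewrite mulrA; congr (_ * _); last first.
  by apply: eq_bigr => e /negbTE ein; rewrite !big_bool /G ein !mulr1.
rewrite (eq_bigr (fun _ => 1 - p)); last first.
  by move=> e ein; rewrite big_bool /G ein /= mulr0 add0r mulr1 Fw_false.
rewrite (bigID (fun e => delta sg e)) /= [in RHS](bigID (fun e => delta sg e)) /=.
rewrite mulrA; congr (_ * _); last first.
  apply: eq_bigr => e /andP [_ /negbTE ->]; rewrite big_bool Fw_false /Fw /=.
  by rewrite mulr0 mulr0 add0r add0r.
rewrite [X in _ = _ * X]big1 ?mulr1; last first.
  move=> e /andP [_ ->]; rewrite big_bool Fw_false /Fw /= mulr1 mulr0 addr0 mulr1.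
  by rewrite addrC subrK.
rewrite -prodr_const; apply: eq_bigl => e; by rewrite inE.
Qed.

End Comb.

Section Ana.
Variables (R : realType) (V : finType) (adj : rel V) (p : R).
Local Notation S := (state adj).
Local Notation gen := (@gen R V adj p).
Local Notation genpow := (@genpow R V adj p).
Local Notation trans := (@trans R V adj p).
Local Notation IP := (@IP R V adj p).

Definition Kb : R := \sum_(a : S) \sum_(c : S) `|gen a c|.

Lemma Kb_ge0 : 0 <= Kb.
Proof. by apply: sumr_ge0 => a _; apply: sumr_ge0. Qed.

Lemma row_le a : \sum_(c : S) `|gen a c| <= Kb.
Proof.
rewrite /Kb [X in _ <= X](bigD1 a) //= lerDl; apply: sumr_ge0 => b _; apply: sumr_ge0 => c _; exact: normr_ge0.
Qed.

Lemma genpow_bound n a b : `|genpow n a b| <= Kb ^+ n.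
Proof.
elim: n a => [|n IH] a /=.
  by case: eqP; rewrite ?normr1 ?normr0 ?expr0.
apply: le_trans (ler_norm_sum _ _ _) _.
apply: (@le_trans _ _ (\sum_c `|gen a c| * Kb ^+ n)).
  apply: ler_sum => c _; rewrite normrM; apply: ler_pM => //.
rewrite -mulr_suml exprS; apply: ler_pM => //.
- by apply: sumr_ge0.
- by apply: exprn_ge0; exact: Kb_ge0.
- exact: row_le.
Qed.

Definition u t a b n : R := t ^+ n / (n`!)%:R * genpow n a b.

Lemma transE t a b : trans t a b = limn (series (u t a b) : nat -> R).
Proof.
rewrite /Defs.trans (_ : (fun N : nat => _) = series (u t a b)) //.
by apply/funext => N; rewrite /series /= big_mkord.
Qed.

Lemma fact_inv_le1 n : ((n`!)%:R : R)^-1 <= 1.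
Proof. by rewrite invr_le1 // ?ler1n ?fact_gt0 // unitfE pnatr_eq0 -lt0n fact_gt0. Qed.

Lemma fact_inv_ge0 n : 0 <= ((n`!)%:R : R)^-1.
Proof. by rewrite invr_ge0. Qed.

Lemma trans_cvg t a b : cvgn (series (u t a b)).
Proof.
apply: normed_cvg.
apply: (series_le_cvg _ _ _ (is_cvg_series_exp_coeff (`|t| * Kb))).
- by move=> n /=.
- move=> n; rewrite /exp_coeff /=; apply: mulr_ge0; last exact: fact_inv_ge0.
  by apply: exprn_ge0; apply: mulr_ge0 => //; exact: Kb_ge0.
- move=> n /=; rewrite /exp_coeff /u /= !normrM normrX normfV normr_nat.
  rewrite exprMn mulrAC [X in _ <= X]mulrAC [X in _ <= X]mulrAC.
  apply: ler_pM => //.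
  apply: ler_wpM2l; [exact: exprn_ge0 | exact: genpow_bound].
Qed.


Local Notation IPw := (@IPweight R V adj p).

Lemma IP_gen b : \sum_a IP a * gen a b = 0.
Proof.
rewrite /Defs.IP; under eq_bigr do rewrite mulrAC.
by rewrite -mulr_suml (@stationary R V adj p b) mul0r.
Qed.

Lemma IP_genpow n b : \sum_a IP a * genpow n.+1 a b = 0.
Proof.
transitivity (\sum_c (\sum_a IP a * gen a c) * genpow n c b).
  rewrite /=; under eq_bigr do rewrite mulr_sumr.
  rewrite exchange_big /=; apply: eq_bigr => c _; rewrite mulr_suml.
  by apply: eq_bigr => a _; rewrite mulrA.
by rewrite big1 // => c _; rewrite IP_gen mul0r.
Qed.


Lemma IP_series t b N : \sum_a IP a * series (u t a b) N.+1 = IP b.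
Proof.
transitivity (\sum_(0 <= k < N.+1) \sum_a IP a * u t a b k).
  rewrite exchange_big /=; apply: eq_bigr => a _.
  by rewrite /series /= mulr_sumr.
rewrite big_ltn // [X in _ + X](_ : _ = 0) ?addr0.
  rewrite /u /= expr0 divr1 (bigD1 b) //= eqxx mul1r mulr1 big1 ?addr0 //.
  by move=> a /negbTE ->; rewrite mul1r mulr0.
apply: big1_seq => -[|k] /andP [_]; rewrite mem_index_iota // => _.
rewrite /u; under eq_bigr do rewrite mulrCA.
by rewrite -mulr_sumr IP_genpow mulr0.
Qed.


Lemma law_atE s b : @law_at R V adj p s b = IP b.
Proof.
have cv : (fun N => \sum_a IP a * series (u s a b) N) @ \oo --> \sum_a IP a * trans s a b.
  apply: (@cvg_big _ _ +%R 0 xpredT add_continuous) => a _.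
  rewrite transE; apply: cvgMl_tmp; exact: trans_cvg.
rewrite /Defs.law_at; apply: (cvg_unique (@Rhausdorff R) cv).
apply: cvg_near_cst; near=> N.
have hN : (1 <= N)%N by near: N; exact: nbhs_infty_ge.
by rewrite -(prednK hN) IP_series.
Unshelve. all: by end_near.
Qed.


Lemma geom (y : R) N : 0 <= y -> 2 * y <= 1 ->
  \sum_(2 <= k < N.+2) y ^+ k <= 2 * y ^+ 2 - 2 * y ^+ N.+2.
Proof.
move=> y0 y1; elim: N => [|N IH]; first by rewrite big_geq // subrr.
rewrite big_nat_recr //= [y ^+ N.+3]exprS.
have := exprn_ge0 N.+2 y0; move: IH; set z := y ^+ N.+2; set A := \sum_(_ <= _ < _) _.
nra.
Qed.

Lemma u_bound t a b k : 0 <= t -> `|u t a b k| <= (t * (Kb + 1)) ^+ k.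
Proof.
move=> t0; rewrite /u !normrM normrX normfV normr_nat ger0_norm // exprMn -mulrA.
apply: ler_wpM2l; first exact: exprn_ge0.
apply: (@le_trans _ _ (1 * Kb ^+ k)).
  apply: ler_pM; [exact: fact_inv_ge0 | exact: normr_ge0 | exact: fact_inv_le1 | exact: genpow_bound].
rewrite mul1r; apply: lerXn2r; rewrite ?nnegrE ?Kb_ge0 ?lerDl //.
by rewrite addr_ge0 // Kb_ge0.
Qed.

Lemma genpow1 a b : genpow 1 a b = gen a b.
Proof.
rewrite /= (bigD1 b) //= eqxx mulr1 big1 ?addr0 // => c /negbTE ->.
by rewrite mulr0.
Qed.

Lemma u1 t a b : u t a b 1 = t * gen a b.
Proof. by rewrite /u genpow1 expr1 /= divr1. Qed.

Lemma trans_small t a b : a != b -> 0 < t -> 2 * (t * (Kb + 1)) <= 1 ->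
  `|trans t a b - t * gen a b| <= 2 * (t * (Kb + 1)) ^+ 2.
Proof.
move=> ab t0 ty.
have y0 : 0 <= t * (Kb + 1) by apply: mulr_ge0; [exact: ltW | rewrite addr_ge0 // Kb_ge0].
have hseq N : `|series (u t a b) N.+2 - t * gen a b| <= 2 * (t * (Kb + 1)) ^+ 2.
  rewrite /series /= big_ltn // big_ltn // u1.
  rewrite {1}/u /= (negbTE ab) mulr0 add0r addrAC subrr add0r.
  apply: le_trans (ler_norm_sum _ _ _) _.
  apply: (@le_trans _ _ (\sum_(2 <= k < N.+2) (t * (Kb + 1)) ^+ k)).
    by apply: ler_sum => k _; apply: u_bound; rewrite ltW.
  apply: le_trans (geom _ N y0 ty) _.
  have := exprn_ge0 N.+2 y0; lra.
have cv : (fun N => `|series (u t a b) N - t * gen a b|) @ \oo -->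
          `|trans t a b - t * gen a b|.
  rewrite transE; apply: cvg_norm.
  apply: (@cvgB _ _ _ _ _ (series (u t a b)) (fun _ => t * gen a b)).
    exact: trans_cvg.
  exact: cvg_cst.
apply: (cvgr_to_le cv); near=> N.
have hN : (2 <= N)%N by near: N; exact: nbhs_infty_ge.
have -> : N = (N - 2).+2 by rewrite -addn2 subnK.
exact: hseq.
Unshelve. all: by end_near.
Qed.


Lemma lin_bound_cvg (f : R -> R) (L C d : R) : 0 < d ->
  (forall t, 0 < t -> t <= d -> `|f t - L| <= C * t) -> f @ at_right 0 --> L.
Proof.
move=> d0 H; apply/cvgrPdist_le => e e0.
have C1 : 0 < `|C| + 1 by have := normr_ge0 C; lra.
have e1 : 0 < e / (`|C| + 1) by rewrite divr_gt0.
near=> t.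
have t0 : 0 < t by near: t; exact: nbhs_right_gt.
have td : t <= d by near: t; exact: nbhs_right_le.
have te : t <= e / (`|C| + 1) by near: t; exact: nbhs_right_le.
rewrite distrC; apply: le_trans (H t t0 td) _.
move: te; rewrite ler_pdivlMr // => te.
have := ler_norm C; nra.
Unshelve. all: by end_near.
Qed.

End Ana.

Theorem proposition2 (R : realType) (V : finType) (adj : rel V)
  (adj_sym : symmetric adj) (adj_irr : irreflexive adj)
  (p : R) (hp0 : 0 <= p) (hp1 : p <= 1)
  (x : V) (sg : {ffun V -> bool}) (s : R) (hs : 0 <= s)
  (hpos : 0 < @prob_spin R V adj p s sg) :
  (fun t : R => @cond_prob R V adj p s t sg (flip_spin sg x) / t) @ at_right 0
    --> (1 - p) ^+ #|[set e in @Ex V adj x | @delta V adj sg e]|.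
Proof.
set sg' := flip_spin sg x.
set T := (1 - p) ^+ _.
set P := @prob_spin R V adj p s sg.
set K' := @Kb R V adj p + 1.
have K'0 : 0 < K' by have := @Kb_ge0 R V adj p; rewrite /K'; lra.
have PE : P = \sum_(a : state adj | a.2 == sg) IP p a.
  by rewrite /P /prob_spin; apply: eq_bigr => a _; rewrite (@law_atE R V adj p).
have TE : \sum_(a : state adj | a.2 == sg) IP p a * \sum_(b : state adj | b.2 == sg') gen p a b = T * P.
  rewrite (eq_bigr (fun a => IP p a * (closed_at V adj x a)%:R)); last first.
    by move=> a /eqP ha; rewrite (@gen_flip R V adj p sg x a ha).
  rewrite PE /IP.
  under eq_bigr do rewrite mulrAC.
  rewrite -mulr_suml (@sum_closed R V adj p sg x) -mulrA; congr (_ * _).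
  by rewrite mulr_suml.
have neq (a b : state adj) : a.2 = sg -> b.2 = sg' -> a != b.
  move=> ha hb; apply/negP => /eqP hab; move: (flip_spin_neq V sg x).
  by rewrite -/sg' -hb -hab ha eqxx.
pose C := (\sum_(a : state adj | a.2 == sg) \sum_(b : state adj | b.2 == sg') `|IP p a| * (2 * K' ^+ 2)) / P.
apply: (@lin_bound_cvg R _ _ C (1 / (2 * K'))); first by rewrite divr_gt0 // mulr_gt0.
move=> t t0 td.
have ty : 2 * (t * K') <= 1.
  by move: td; rewrite ler_pdivlMr ?mulr_gt0 // mulrCA.
have bnd (a b : state adj) : a.2 = sg -> b.2 = sg' ->
    `|trans p t a b / t - gen p a b| <= 2 * K' ^+ 2 * t.
  move=> ha hb.
  have tn0 : t != 0 by rewrite gt_eqF.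
  rewrite (_ : trans p t a b / t - gen p a b = (trans p t a b - t * gen p a b) / t);
    last by field.
  rewrite normrM normfV (gtr0_norm t0) ler_pdivrMr //.
  apply: le_trans (@trans_small R V adj p t a b (neq a b ha hb) t0 ty) _.
  by rewrite /K' le_eqVlt; apply/orP; left; apply/eqP; ring.
have E : @cond_prob R V adj p s t sg sg' / t - T =
    (\sum_(a : state adj | a.2 == sg) \sum_(b : state adj | b.2 == sg')
        IP p a * (trans p t a b / t - gen p a b)) / P.
  have P0 : P != 0 by rewrite gt_eqF.
  have tn0 : t != 0 by rewrite gt_eqF.
  have -> : T = (T * P) / P by rewrite mulfK.
  rewrite -TE /cond_prob -/P /prob_spin2.
  rewrite (eq_bigr (fun a => \sum_(b : state adj | b.2 == sg') IP p a * trans p t a b)); last first.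
    by move=> a _; apply: eq_bigr => b _; rewrite (@law_atE R V adj p).
  set X := \sum_(a | _) \sum_(b | _) IP p a * trans p t a b.
  set Y := \sum_(a | _) IP p a * _.
  have -> : \sum_(a : state adj | a.2 == sg) \sum_(b : state adj | b.2 == sg') IP p a * (trans p t a b / t - gen p a b)
      = X / t - Y.
    rewrite /X /Y mulr_suml -sumrB; apply: eq_bigr => a _.
    rewrite mulr_suml mulr_sumr -sumrB; apply: eq_bigr => b _.
    by rewrite mulrBr mulrA.
  by rewrite mulrBl [X / t / P]mulrAC.
rewrite E normrM normfV (gtr0_norm hpos).
rewrite /C mulrAC; apply: ler_wpM2r; first by rewrite invr_ge0 ltW.
apply: le_trans (ler_norm_sum _ _ _) _.
rewrite mulr_suml; apply: ler_sum => a ha.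
apply: le_trans (ler_norm_sum _ _ _) _.
rewrite mulr_suml; apply: ler_sum => b hb.
rewrite normrM -mulrA; apply: ler_wpM2l; first exact: normr_ge0.
exact: bnd (eqP ha) (eqP hb).
Qed.
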